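(* Let $s\le k$ be positive integers and let $\tau_1,\dots,\tau_k\in[0,1]$ be distinct abscissae. Let $\ell_j$, $j=1,\dots,k$, be the Lagrange polynomials of degree $k-1$ on the nodes $\{\tau_i\}$, and let $\mathcal A=(\alpha_{ij})\in\mathbb R^{k\times k}$ with $\alpha_{ij}=\int_0^{\tau_i}\ell_j(x)\,\mathrm{d}x$ and $\omega_j=\int_0^1\ell_j(x)\,\mathrm{d}x$ (so $(\tau,\mathcal A,\omega)$ is the $k$-stage collocation Runge-Kutta method at these nodes). Let $P_j(t)=\sqrt{2j-1}\,\hat P_{j-1}(t)$, where $\hat P_{j-1}$ is the shifted Legendre polynomial of degree $j-1$ on $[0,1]$, let $\Omega=\mathrm{diag}(\omega_1,\dots,\omega_k)$, and let $\mathcal P_s,\mathcal I_s\in\mathbb R^{k\times s}$ have entries $(\mathcal P_s)_{ij}=P_j(\tau_i)$ and $(\mathcal I_s)_{ij}=\int_0^{\tau_i}P_j(x)\,\mathrm{d}x$. Suppose that the quadrature formula with nodes $\tau_i$ and weights $\omega_i$ is exact for polynomials of degree at least $2s-1$. Then the Runge-Kutta method with abscissae $\tau_1,\dots,\tau_k$, weights $\omega_1,\dots,\omega_k$ and Butcher matrix $A=\mathcal A\,\mathcal P_s\,\mathcal P_s^T\,\Omega$ is the HBVM$(k,s)$ method based at the abscissae $\{\tau_i\}$, i.e. $\mathcal A\,\mathcal P_s\,\mathcal P_s^T\,\Omega=\mathcal I_s\,\mathcal P_s^T\,\Omega$.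
   Context: HBVM$(k,s)$ (Hamiltonian Boundary Value Method with $k$ steps and degree $s$) based at abscissae $\tau_1,\dots,\tau_k$ with weights $\omega_1,\dots,\omega_k$ is the Runge-Kutta method whose Butcher tableau has abscissae $\tau_i$, weights $\omega_i$, and Butcher matrix $\mathcal I_s\,\mathcal P_s^T\,\Omega$, with $\mathcal I_s,\mathcal P_s,\Omega$ as defined in the claim. *)

(* Defs.v *)
From HB Require Import structures.
From mathcomp Require Import all_boot all_order all_algebra.
From mathcomp Require Import reals.
Set Implicit Arguments. Unset Strict Implicit. Unset Printing Implicit Defensive.
Import Order.TTheory GRing.Theory Num.Theory.
Local Open Scope ring_scope.

Section Defs.
Variable R : realType.

Definition pint (p : {poly R}) (a b : R) : R :=
  \sum_(i < size p) p`_i * (b ^+ i.+1 - a ^+ i.+1) / (i.+1)%:R.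

Definition lagrange (k : nat) (tau : 'I_k -> R) (j : 'I_k) : {poly R} :=
  \prod_(m < k | m != j) (('X - (tau m)%:P) * ((tau j - tau m)^-1)%:P).

(* Shifted Legendre polynomial of degree n on [0,1] (Rodrigues formula):
   hatP_n(x) = 1/n! d^n/dx^n (x^2 - x)^n. *)
Definition shifted_legendre (n : nat) : {poly R} :=
  (n`!%:R)^-1 *: ((('X ^+ 2 - 'X) ^+ n)^`(n)).

Definition legP (j : nat) : {poly R} :=
  Num.sqrt ((2 * j)%:R - 1) *: shifted_legendre j.-1.

Definition colloc_A (k : nat) (tau : 'I_k -> R) : 'M[R]_k :=
  \matrix_(i, j) pint (lagrange tau j) 0 (tau i).

Definition colloc_w (k : nat) (tau : 'I_k -> R) (j : 'I_k) : R :=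
  pint (lagrange tau j) 0 1.

Definition Omega_mx (k : nat) (tau : 'I_k -> R) : 'M[R]_k :=
  diag_mx (\row_j colloc_w tau j).

(* (P_s)_{ij} = P_j(tau_i), j = 1..s  (column index j : 'I_s stands for j+1). *)
Definition Ps_mx (k s : nat) (tau : 'I_k -> R) : 'M[R]_(k, s) :=
  \matrix_(i, j) (legP j.+1).[tau i].

Definition Is_mx (k s : nat) (tau : 'I_k -> R) : 'M[R]_(k, s) :=
  \matrix_(i, j) pint (legP j.+1) 0 (tau i).

End Defs.

(* Main.v *)
From Pilot Require Import Defs.
From HB Require Import structures.
From mathcomp Require Import all_boot all_order all_algebra.
From mathcomp Require Import reals.
From mathcomp Require Import zify.
Import Order.TTheory GRing.Theory Num.Theory.
Local Open Scope ring_scope.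

Section Helpers.
Variable R : realType.

Lemma pintE (p : {poly R}) a b n : (size p <= n)%N ->
  pint p a b = \sum_(i < n) p`_i * (b ^+ i.+1 - a ^+ i.+1) / (i.+1)%:R.
Proof.
move=> hn; rewrite /pint (big_ord_widen n (fun i : nat => p`_i * (b ^+ i.+1 - a ^+ i.+1) / (i.+1)%:R)) //.
rewrite big_mkcond; apply: eq_bigr => i _; case: ltnP => h //.
by rewrite nth_default // !mul0r.
Qed.

Lemma pint0 a b : pint (0 : {poly R}) a b = 0.
Proof. by rewrite /pint size_poly0 big_ord0. Qed.

Lemma pintD a b (p q : {poly R}) : pint (p + q) a b = pint p a b + pint q a b.
Proof.
set n := maxn (size p) (size q).
rewrite (pintE _ _ _ n (size_polyD _ _)) (pintE p _ _ n (leq_maxl _ _)).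
rewrite (pintE q _ _ n (leq_maxr _ _)) -big_split; apply: eq_bigr => i _.
by rewrite coefD !mulrDl.
Qed.

Lemma pintZ a b c (p : {poly R}) : pint (c *: p) a b = c * pint p a b.
Proof.
rewrite (pintE _ _ _ (size p) (size_scale_leq _ _)) /pint mulr_sumr.
by apply: eq_bigr => i _; rewrite coefZ !mulrA.
Qed.

Lemma pint_sum k (c : 'I_k -> R) (q : 'I_k -> {poly R}) a b :
  pint (\sum_j c j *: q j) a b = \sum_j c j * pint (q j) a b.
Proof.
rewrite (big_morph (fun p => pint p a b) (pintD a b) (pint0 a b)).
by apply: eq_bigr => j _; rewrite pintZ.
Qed.

Variables (k : nat) (tau : 'I_k -> R).
Hypothesis inj : injective tau.

Lemma lag_eval (i j : 'I_k) : (Pilot.Defs.lagrange tau j).[tau i] = (i == j)%:R.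
Proof.
rewrite /Pilot.Defs.lagrange horner_prod; case: eqP => [->|/eqP nij].
  apply: big1 => m hm; rewrite hornerM hornerXsubC hornerC mulfV //.
  rewrite subr_eq0; apply/eqP => h; move: hm; rewrite (inj _ _ h) eqxx //.
by rewrite (bigD1 i nij) /= hornerM hornerXsubC subrr !mul0r.
Qed.

Lemma lag_size (j : 'I_k) : (size (Pilot.Defs.lagrange tau j) <= k)%N.
Proof.
rewrite /Pilot.Defs.lagrange; apply: leq_trans (size_poly_prod_leq _ _) _.
set S := (\sum_(i | _) _)%N.
have hS : (S <= \sum_(i | i != j) 2)%N.
  apply: leq_sum => m _; apply: leq_trans (size_polyMleq _ _) _.
  by rewrite size_XsubC size_polyC; case: (_ != 0).
move: hS; rewrite sum_nat_const.
have -> : #|(fun m : 'I_k => m != j)| = k.-1.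
  by rewrite -[in RHS](card_ord k) -(cardC1 j); apply: eq_card.
have := ltn_ord j; lia.
Qed.

Lemma interp (p : {poly R}) : (size p <= k)%N ->
  p = \sum_j p.[tau j] *: Pilot.Defs.lagrange tau j.
Proof.
move=> hp; apply/eqP; rewrite -subr_eq0; apply/negPn/negP => hnz.
have := max_poly_roots (rs := map tau (enum 'I_k)) hnz.
rewrite size_map size_enum_ord.
have hs : (size (p - \sum_j p.[tau j] *: Pilot.Defs.lagrange tau j)%R <= k)%N.
  apply: leq_trans (size_polyD _ _) _; rewrite size_polyN geq_max hp /=.
  apply: leq_trans (size_sum _ _ _) _.
  apply: (big_ind (fun n => (n <= k)%N)) => [//|x y hx hy|j _].
    by rewrite geq_max hx hy.
  exact: leq_trans (size_scale_leq _ _) (lag_size j).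
move=> H; suff: (k < k)%N by rewrite ltnn.
apply: leq_trans hs; apply: H.
  apply/allP => x /mapP [i _ ->]; rewrite /root hornerD hornerN horner_sum.
  under eq_bigr do rewrite hornerZ lag_eval.
  rewrite (bigD1 i) //= eqxx mulr1 big1 ?addr0 ?subrr // => m hm.
  by rewrite eq_sym (negbTE hm) mulr0.
by rewrite map_inj_uniq // enum_uniq.
Qed.

End Helpers.

Lemma legP_size (R : realType) n : (size (@legP R n.+1) <= n.+1)%N.
Proof.
rewrite /legP /=; apply: leq_trans (size_scale_leq _ _) _.
rewrite /shifted_legendre; apply: leq_trans (size_scale_leq _ _) _.
set q := ('X ^+ 2 - 'X) ^+ n.
have h3 : (size ('X ^+ 2 - 'X : {poly R})%R <= 3)%N.
  apply: leq_trans (size_polyD _ _) _.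
  by rewrite size_polyN size_polyXn size_polyX.
have hq : (size q <= (2 * n).+1)%N.
  have := size_exp ('X ^+ 2 - 'X : {poly R}) n; rewrite -/q.
  move: h3; set a := size _; set b := size q.
  move=> h3 e; have : (b <= b.-1.+1)%N by case: b {e}.
  rewrite e; move=> hb; apply: leq_trans hb _.
  have : (a.-1 <= 2)%N by lia.
  by move=> ha; rewrite ltnS; exact: leq_mul ha (leqnn n).
apply/leq_sizeP => j hj; rewrite coef_derivn nth_default ?mul0rn //.
apply: leq_trans hq _; lia.
Qed.

Theorem theorem2 (R : realType) (k s : nat) (tau : 'I_k -> R) :
  (0 < s)%N -> (s <= k)%N ->
  injective tau ->
  (forall i, 0 <= tau i <= 1) ->
  (forall p : {poly R}, (size p <= 2 * s)%N ->
     \sum_(i < k) colloc_w tau i * p.[tau i] = pint p 0 1) ->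
  colloc_A tau *m Ps_mx s tau *m (Ps_mx s tau)^T *m Omega_mx tau
  = Is_mx s tau *m (Ps_mx s tau)^T *m Omega_mx tau.
Proof.
move=> _ hsk inj _ _.
suff -> : colloc_A tau *m Ps_mx s tau = Is_mx s tau by [].
apply/matrixP => i l; rewrite /colloc_A /Ps_mx /Is_mx !mxE.
have hl : (size (@legP R l.+1) <= k)%N.
  apply: leq_trans (legP_size _ _) _; exact: leq_trans (ltn_ord l) hsk.
rewrite [in RHS](@interp R k tau inj _ hl) pint_sum.
apply: eq_bigr => j _; rewrite mxE [in X in _ * X]mxE.
exact: mulrC.
Qed.
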